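(* Let $\beta$ be a Pisot number. Let $[0,1]=\bigcup_{i=1}^{\ell} J_i$ be a finite partition of $[0,1]$ into subintervals, and let $S:[0,1]\to[0,1]$ be given by $$S(x)=\epsilon_i \beta^{m_i} x + b_i \quad\text{for } x\in J_i,$$ where $\epsilon_i\in\{-1,1\}$, $m_i$ is a positive integer and $b_i\in\mathbb{Q}(\beta)$ for $1\le i\le \ell$ (these data are assumed to be such that $S$ maps $[0,1]$ into $[0,1]$). Then for $x\in[0,1]$, the orbit $(S^n(x))_{n\ge 0}$ is eventually periodic if and only if $x\in\mathbb{Q}(\beta)$.
   Context: A Pisot number is a real algebraic integer greater than one all of whose Galois conjugates other than itself have modulus less than one. The subintervals $J_i$ may be closed, open, half-open, or singletons. *)

(* Defs.v *)
From HB Require Import structures.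
From mathcomp Require Import all_boot all_order all_algebra.
From mathcomp Require Import reals.
From mathcomp.real_closed Require Import complex.
Set Implicit Arguments. Unset Strict Implicit. Unset Printing Implicit Defensive.
Import Order.TTheory GRing.Theory Num.Theory.
Local Open Scope ring_scope.

(* beta is a Pisot number: a real algebraic integer > 1 (root of a monic integer
   polynomial that is irreducible over Q, i.e. its minimal polynomial) all of
   whose Galois conjugates other than beta (the other complex roots of that
   polynomial) have modulus < 1. *)
Definition pisot (R : realType) (beta : R) : Prop :=
  exists p : {poly int},
    [/\ p \is monic,
        irreducible_poly (map_poly intr p : {poly rat}),
        root (map_poly intr p : {poly R}) beta,
        1 < beta &
        forall z : complex R, root (map_poly intr p) z -> z != (beta%:C)%C ->
          `|z| < 1].

Definition in_Qbeta (R : realType) (beta x : R) : Prop :=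
  exists p q : {poly rat},
    (map_poly ratr q).[beta] != 0 /\
    x = (map_poly ratr p).[beta] / (map_poly ratr q).[beta].

Definition eventually_periodic (T : Type) (S : T -> T) (x : T) : Prop :=
  exists N p : nat, (0 < p)%N /\ iter (N + p) S x = iter N S x.

(* Main.v *)
Require Import Defs.
From HB Require Import structures.
From mathcomp Require Import all_boot all_order all_algebra all_field.
From mathcomp Require Import reals.
From mathcomp.real_closed Require Import complex.
Import Order.TTheory GRing.Theory Num.Theory.
Local Open Scope ring_scope.
From mathcomp Require Import ring lra.
From mathcomp.real_closed Require polyorder.
Set Implicit Arguments. Unset Strict Implicit. Unset Printing Implicit Defensive.

Definition QB (R : realType) (beta x : R) :=
  exists P : {poly rat}, x = (map_poly ratr P).[beta].

Lemma QB_add (R : realType) (beta x y : R) : QB beta x -> QB beta y -> QB beta (x + y).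
Proof. by move=> [P ->] [Q ->]; exists (P + Q); rewrite rmorphD hornerD. Qed.

Lemma QB_mul (R : realType) (beta x y : R) : QB beta x -> QB beta y -> QB beta (x * y).
Proof. by move=> [P ->] [Q ->]; exists (P * Q); rewrite rmorphM hornerM. Qed.

Lemma QB_opp (R : realType) (beta x : R) : QB beta x -> QB beta (- x).
Proof. by move=> [P ->]; exists (- P); rewrite rmorphN hornerN. Qed.

Lemma QB_1 (R : realType) (beta : R) : QB beta 1.
Proof. by exists 1; rewrite rmorph1 hornerC. Qed.

Lemma QB_0 (R : realType) (beta : R) : QB beta 0.
Proof. by exists 0; rewrite rmorph0 horner0. Qed.

Lemma QB_beta (R : realType) (beta : R) : QB beta beta.
Proof. by exists 'X; rewrite map_polyX hornerX. Qed.

Lemma QB_exp (R : realType) (beta x : R) n : QB beta x -> QB beta (x ^+ n).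
Proof.
move=> h; elim: n => [|n IH]; first by rewrite expr0; apply: QB_1.
by rewrite exprS; apply: QB_mul.
Qed.

Lemma map_ratr_int (F : numFieldType) (p : {poly int}) :
  map_poly (ratr : rat -> F) (map_poly intr p) = map_poly intr p.
Proof.
rewrite -map_poly_comp; apply: eq_map_poly => z /=; exact: ratr_int.
Qed.

Lemma QB_inv (R : realType) (beta x : R) (p : {poly int}) :
  irreducible_poly (map_poly intr p : {poly rat}) ->
  root (map_poly intr p : {poly R}) beta ->
  QB beta x -> QB beta x^-1.
Proof.
move=> irr rt [P ->].
have [->|nz] := eqVneq (map_poly ratr P).[beta] 0.
  by rewrite invr0; apply: QB_0.
have : coprimep (map_poly intr p : {poly rat}) P.
  rewrite irreducible_poly_coprime //; apply/negP => /dvdpP [r eP].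
  move: nz; rewrite eP rmorphM /= hornerM map_ratr_int.
  by move/rootP: rt => ->; rewrite mulr0 eqxx.
move/Bezout_eq1_coprimepP => [[u v] /= e].
exists v.
have := congr1 (fun q => (map_poly (ratr : rat -> R) q).[beta]) e.
rewrite /= rmorphD !rmorphM /= hornerD !hornerM map_ratr_int.
move/rootP: rt => ->; rewrite mulr0 add0r rmorph1 hornerC => h.
by apply: (mulIf nz); rewrite mulVf // h.
Qed.

Lemma QB_of_in (R : realType) (beta x : R) (p : {poly int}) :
  irreducible_poly (map_poly intr p : {poly rat}) ->
  root (map_poly intr p : {poly R}) beta ->
  Defs.in_Qbeta beta x -> QB beta x.
Proof.
move=> irr rt [P [Q [_ ->]]]; apply: QB_mul; first by exists P.
by apply: (QB_inv irr rt); exists Q.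
Qed.

Lemma in_of_QB (R : realType) (beta x : R) : QB beta x -> Defs.in_Qbeta beta x.
Proof.
move=> [P ->]; exists P, 1; rewrite rmorph1 hornerC oner_eq0; split=> //.
by rewrite divr1.
Qed.

Lemma orbit_in (R : realType) (S : R -> R) x n :
  (forall x, x \in `[0, 1] -> S x \in `[0, 1]) -> x \in `[0, 1] ->
  iter n S x \in `[(0:R), 1].
Proof. by move=> hS hx; elim: n => [|n IH] //=; apply: hS. Qed.

Lemma QB_eps (R : realType) (beta e : R) : e = 1 \/ e = -1 -> QB beta e.
Proof. by case=> ->; [apply: QB_1 | apply/QB_opp/QB_1]. Qed.

Lemma partB (R : realType) (beta : R) (p : {poly int}) (l : nat)
  (J : 'I_l -> interval R) (eps : 'I_l -> R) (m : 'I_l -> nat)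
  (b : 'I_l -> R) (S : R -> R) :
  irreducible_poly (map_poly intr p : {poly rat}) ->
  root (map_poly intr p : {poly R}) beta -> 1 < beta ->
  (forall x, x \in `[0, 1] -> exists i, x \in J i) ->
  (forall i, eps i = 1 \/ eps i = -1) ->
  (forall i, (0 < m i)%N) ->
  (forall i, QB beta (b i)) ->
  (forall i x, x \in J i -> S x = eps i * beta ^+ m i * x + b i) ->
  (forall x, x \in `[0, 1] -> S x \in `[0, 1]) ->
  forall x, x \in `[(0 : R), 1] ->
    Defs.eventually_periodic S x -> QB beta x.
Proof.
move=> irr rt b1 cov heps hm hb hS hS01.
have epsn0 i : eps i != 0.
  by case: (heps i) => ->; rewrite ?oppr_eq0 oner_eq0.
have b0 : beta != 0 by apply: lt0r_neq0; apply: lt_trans b1.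
have aff k y : y \in `[0, 1] -> exists a c, [/\ QB beta a, QB beta c, 1 <= `|a|,
    (0 < k)%N -> 1 < `|a| & iter k S y = a * y + c].
  move=> hy; elim: k => [|k [a [c [qa qc a1 a2 e]]]].
    exists 1, 0; split => //; [exact: QB_1 | exact: QB_0 | by rewrite normr1 |].
    by rewrite mul1r addr0.
  have [i hi] := cov _ (orbit_in k hS01 hy).
  exists (eps i * beta ^+ m i * a), (eps i * beta ^+ m i * c + b i); split.
  - by apply: QB_mul => //; apply: QB_mul; [apply: QB_eps | apply: QB_exp; apply: QB_beta].
  - apply: QB_add => //; apply: QB_mul => //.
    by apply: QB_mul; [apply: QB_eps | apply: QB_exp; apply: QB_beta].
  - have t1 : 1 < beta ^+ m i by rewrite exprn_egt1 // -lt0n hm.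
    rewrite !normrM (ger0_norm (exprn_ge0 _ (ltW (lt_trans ltr01 b1)))).
    have -> : `|eps i| = 1 by case: (heps i) => ->; rewrite ?normrN normr1.
    by rewrite mul1r; nra.
  - move=> _; have t1 : 1 < beta ^+ m i by rewrite exprn_egt1 // -lt0n hm.
    rewrite !normrM (ger0_norm (exprn_ge0 _ (ltW (lt_trans ltr01 b1)))).
    have -> : `|eps i| = 1 by case: (heps i) => ->; rewrite ?normrN normr1.
    by rewrite mul1r; nra.
  - by rewrite iterS (hS _ _ hi) e; ring.
have back N : forall x, x \in `[0, 1] -> QB beta (iter N S x) -> QB beta x.
  elim: N => [//|N IH] x hx; rewrite iterSr => /(IH _ (hS01 _ hx)).
  have [i hi] := cov _ hx; rewrite (hS _ _ hi) => q.
  have -> : x = (eps i * beta ^+ m i * x + b i - b i) / (eps i * beta ^+ m i).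
    by rewrite addrK mulrC mulKf // mulf_neq0 // expf_neq0.
  apply: QB_mul; first by apply: QB_add => //; apply: QB_opp.
  apply: (QB_inv irr rt); apply: QB_mul; first by apply: QB_eps.
  by apply: QB_exp; apply: QB_beta.
move=> x hx [N [k [k0 e]]]; apply: (back N _ hx).
have hy := orbit_in N hS01 hx.
have [a [c [qa qc a1 a2 e2]]] := aff k _ hy.
move: e; rewrite addnC iterD e2 => e.
have a1n : 1 - a != 0.
  apply/negP => /eqP h; have : a = 1 by apply/eqP; rewrite -subr_eq0 -oppr_eq0 opprB h.
  by move=> ea; move: (a2 k0); rewrite ea normr1 ltxx.
have -> : iter N S x = c / (1 - a).
  by apply: (mulIf a1n); rewrite mulfVK // mulrBr mulr1 -{1}e; ring.
by apply: QB_mul => //; apply: (QB_inv irr rt); apply: QB_add; [apply: QB_1 | apply: QB_opp].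
Qed.

Lemma pigeon (T : finType) (f : nat -> T) : exists i j, (i < j)%N /\ f i = f j.
Proof.
set s := [seq f i | i <- iota 0 #|T|.+1].
have : ~~ uniq s.
  apply/negP => u; have := card_uniqP u; rewrite size_map size_iota => h.
  by have := max_card (mem s); rewrite h ltnn.
case/(uniqPn (f 0)) => i [j [ij js e]]; exists i, j; split => //.
move: js e; rewrite /s size_map size_iota => js.
by rewrite !(nth_map 0) ?size_iota ?(ltn_trans ij) // !nth_iota ?(ltn_trans ij).
Qed.

Definition evZ (F : comNzRingType) (A : {poly int}) (z : F) := (map_poly intr A).[z].

Lemma evZZ (F : comNzRingType) (c : int) (A : {poly int}) (z : F) :
  evZ (c *: A) z = c%:~R * evZ A z.
Proof. by rewrite /evZ map_polyZ hornerZ. Qed.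

Lemma QB_int (R : realType) (beta y : R) : QB beta y ->
  exists (a : int) (A : {poly int}), a != 0 /\ a%:~R * y = evZ A beta.
Proof.
move=> [P ->]; have [A [a a0 ->]] := rat_poly_scale P.
exists a, A; split => //.
rewrite map_polyZ hornerZ map_ratr_int /= fmorphV /= ratr_int /evZ mulrA mulfV ?mul1r //.
by rewrite intr_eq0.
Qed.

Lemma QB_common (R : realType) (beta : R) (s : seq R) : (forall y, y \in s -> QB beta y) ->
  exists D : int, D != 0 /\ forall y, y \in s -> exists A, D%:~R * y = evZ A beta.
Proof.
elim: s => [|y s IH] h.
  by exists 1; split => // y; rewrite in_nil.
have [D [D0 hD]] := IH (fun z hz => h z (mem_behead (s:=y :: s) hz)).
have [a [A [a0 eA]]] := QB_int (h y (mem_head _ _)).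
exists (D * a); split; first by rewrite mulf_neq0.
move=> z; rewrite in_cons => /orP [/eqP ->|hz].
  by exists (D *: A); rewrite evZZ -eA; ring.
have [B eB] := hD z hz; exists (a *: B).
rewrite evZZ -eB; ring.
Qed.

Lemma irr_sep (p : {poly rat}) : irreducible_poly p -> separable_poly p.
Proof.
move=> irr; have s1 := irr.1.
rewrite unlock /separable_poly irreducible_poly_coprime //; apply/negP => dv.
have sd : size p^`() = (size p).-1 by apply: polyorder.size_deriv.
have nz : p^`() != 0 by rewrite -size_poly_eq0 sd; case: (size p) s1 => [|[|n]].
by have := dvdp_leq nz dv; rewrite sd; case: (size p) s1 => [|n] //= _; rewrite ltnn.
Qed.

Lemma intr_C (R : realType) (p : {poly int}) :
  (map_poly intr p : {poly complex R}) = map_poly (real_complex R) (map_poly intr p).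
Proof. by rewrite -map_poly_comp; apply: eq_map_poly => z /=; rewrite rmorph_int. Qed.

Lemma evZ_C (R : realType) (A : {poly int}) (x : R) : evZ A (x%:C)%C = ((evZ A x)%:C)%C.
Proof. by rewrite /evZ intr_C horner_map. Qed.

Lemma roots_C (R : realType) (beta : R) (p : {poly int}) :
  p \is monic -> irreducible_poly (map_poly intr p : {poly rat}) ->
  root (map_poly intr p : {poly R}) beta ->
  exists rs : seq (complex R), [/\ uniq rs,
    map_poly intr p = \prod_(z <- rs) ('X - z%:P), (beta%:C)%C \in rs &
    size rs = (size p).-1].
Proof.
move=> mon irr rt.
set pC : {poly complex R} := map_poly intr p.
have [rs ers] := closed_field_poly_normal pC.
have mC : pC \is monic by apply: monic_map.
move: ers; rewrite (monicP mC) scale1r => ers.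
exists rs; split => //.
- rewrite -separable_prod_XsubC -ers /pC -(map_ratr_int (complex R)).
  by rewrite separable_map; apply: irr_sep.
- rewrite -root_prod_XsubC -ers /pC; apply/rootP.
  by rewrite -/(evZ p _) evZ_C; move/rootP: rt; rewrite /evZ => ->.
- have : size pC = size p.
    by rewrite /pC -(map_ratr_int (complex R)) size_map_poly size_rat_int_poly.
  by rewrite ers size_prod_XsubC => <-.
Qed.

Lemma real_nat_bound (R : realType) (K : complex R) : 0 <= K ->
  exists N : nat, K <= N%:R.
Proof.
move=> K0; have hr := RRe_real (ger0_real K0).
exists (Num.Def.archi_bound (complex.Re K)).
have h0 : 0 <= complex.Re K by move: K0; rewrite -hr lecR.
have := ltW (archi_boundP h0); rewrite -lecR hr => h.
by apply: (le_trans h); rewrite -(rmorph_nat (real_complex R)).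
Qed.

Lemma coef_bound (R : realType) (rs : seq (complex R)) (M : complex R) :
  uniq rs -> 0 <= M -> exists N : nat, forall A : {poly int},
  (size A <= size rs)%N -> (forall z, z \in rs -> `|evZ A z| <= M) ->
  forall k, `|A`_k| <= N%:Z.
Proof.
move=> urs M0; set d := size rs.
pose a : 'rV[complex R]_d := \row_j rs`_j.
pose V := Vandermonde d a.
have Vu : V \in unitmx.
  rewrite unitmxE unitfE det_Vandermonde; apply/prodf_neq0 => i _.
  apply/prodf_neq0 => j ij; rewrite !mxE subr_eq0 nth_uniq //.
  by rewrite gtn_eqF.
pose K := M * \sum_(k < d) \sum_(j < d) `|invmx V j k|.
have K0 : 0 <= K by apply: mulr_ge0 => //; do 2 apply: sumr_ge0 => ? _.
have [N hN] := real_nat_bound K0.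
exists N => A sA hA k.
have [kd|kd] := ltnP k d; last by rewrite (leq_sizeP _ _ sA k kd) normr0.
pose c : 'rV[complex R]_d := \row_i ((A`_i)%:~R).
have ew : c *m V = \row_j evZ A rs`_j.
  apply/rowP => j; rewrite !mxE /evZ (@horner_coef_wide _ d).
    by apply: eq_bigr => i _; rewrite !mxE coef_map.
  by apply/leq_sizeP => i hi; rewrite coef_map (leq_sizeP _ _ sA i hi).
have ec : c = (\row_j evZ A rs`_j) *m invmx V by rewrite -ew mulmxK.
have : `|(A`_k)%:~R : complex R| <= K.
  have -> : (A`_k)%:~R = c 0 (Ordinal kd) by rewrite mxE.
  rewrite ec mxE; apply: (le_trans (ler_norm_sum _ _ _)).
  apply: (@le_trans _ _ (M * \sum_(j < d) `|invmx V j (Ordinal kd)|)).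
    rewrite mulr_sumr; apply: ler_sum => j _; rewrite mxE normrM.
    by apply: ler_wpM2r => //; apply: hA; rewrite mem_nth.
  apply: ler_wpM2l => //.
  rewrite [X in _ <= X](bigD1 (Ordinal kd)) //= lerDl.
  by apply: sumr_ge0 => i _; apply: sumr_ge0.
rewrite -intr_norm => h; have := le_trans h hN.
by rewrite -(ler_int (complex R)).
Qed.

From mathcomp Require Import zify.
Local Open Scope ring_scope.

Lemma evZ_step (F : comNzRingType) (c : int) (k : nat) (W B : {poly int}) (z : F) :
  evZ (c *: ('X^k * W) + B) z = c%:~R * (z ^+ k * evZ W z) + evZ B z.
Proof.
by rewrite /evZ rmorphD /= map_polyZ rmorphM /= map_polyXn hornerD hornerZ hornerM hornerXn.
Qed.

Lemma evZ_mod (F : comNzRingType) (A p : {poly int}) (z : F) :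
  p \is monic -> root (map_poly intr p) z -> evZ (A %% p) z = evZ A z.
Proof.
move=> mon rt; have := Pdiv.Idomain.divp_eq A p.
rewrite (monicP mon) expr1n scale1r => e.
rewrite [in RHS]e /evZ rmorphD rmorphM /= hornerD hornerM.
by move/rootP: rt => ->; rewrite mulr0 add0r.
Qed.

Fixpoint Vseq (step : nat -> {poly int} -> {poly int}) (A0 : {poly int}) (n : nat) :=
  match n with 0%N => A0 | n'.+1 => step n' (Vseq step A0 n') end.

Lemma norm_sum_ge (F : numDomainType) (I : finType) (G : I -> F) (i : I) :
  `|G i| <= \sum_j `|G j|.
Proof.
by rewrite (bigD1 i) //= lerDl; apply: sumr_ge0 => ? _.
Qed.

Lemma shift_lt (c : int) (N : nat) : (`|c| <= N%:Z)%R -> (absz (c + N%:Z)%R < (N + N).+1)%N.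
Proof. rewrite ler_norml => /andP [h1 h2]; lia. Qed.

Lemma shift_inj (c d : int) (N : nat) : (`|c| <= N%:Z)%R -> (`|d| <= N%:Z)%R ->
  absz (c + N%:Z)%R = absz (d + N%:Z)%R -> c = d.
Proof. rewrite !ler_norml => /andP [h1 h2] /andP [h3 h4]; lia. Qed.

Lemma partC (R : realType) (beta : R) (p : {poly int}) (l : nat)
  (J : 'I_l -> interval R) (eps : 'I_l -> R) (m : 'I_l -> nat)
  (b : 'I_l -> R) (S : R -> R) :
  p \is monic ->
  irreducible_poly (map_poly intr p : {poly rat}) ->
  root (map_poly intr p : {poly R}) beta -> 1 < beta ->
  (forall z : complex R, root (map_poly intr p) z -> z != (beta%:C)%C -> `|z| < 1) ->
  (forall x, x \in `[0, 1] -> exists i, x \in J i) ->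
  (forall i, eps i = 1 \/ eps i = -1) ->
  (forall i, (0 < m i)%N) ->
  (forall i, QB beta (b i)) ->
  (forall i x, x \in J i -> S x = eps i * beta ^+ m i * x + b i) ->
  (forall x, x \in `[0, 1] -> S x \in `[0, 1]) ->
  forall x, x \in `[(0 : R), 1] -> QB beta x ->
    Defs.eventually_periodic S x.
Proof.
move=> mon irr rt b1 conj cov heps hm hb hS hS01 x hx qx.
have [rs [urs epC brs srs]] := roots_C mon irr rt.
have hs : forall y, y \in x :: [seq b i | i <- enum 'I_l] -> QB beta y.
  by move=> y; rewrite in_cons => /orP [/eqP -> // | /mapP [i _ ->]]; apply: hb.
have [D [D0 hD]] := QB_common hs.
have [Ax eAx] := hD x (mem_head _ _).
have [Bf eB] : exists Bf : 'I_l -> {poly int}, forall i, D%:~R * b i = evZ (Bf i) beta.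
  apply: (@fin_all_exists _ (fun _ => {poly int}) (fun i A => D%:~R * b i = evZ A beta)).
  move=> i; apply: hD; rewrite in_cons; apply/orP; right.
  by apply/mapP; exists i => //; rewrite mem_enum.
have [i0 _] := cov x hx.
pose idx y := odflt i0 [pick i | y \in J i].
have hidx y : y \in `[0, 1] -> y \in J (idx y).
  move=> hy; rewrite /idx; case: pickP => [i //|none].
  by have [i hi] := cov y hy; move: (none i); rewrite hi.
pose y n := iter n S x.
have hy n : y n \in `[0, 1] := orbit_in n hS01 hx.
pose eZ i : int := if eps i == 1 then 1 else -1.
have heZ i : eps i = (eZ i)%:~R.
  rewrite /eZ; case: (heps i) => ->; first by rewrite eqxx.
  have : (-1 : R) != 1 by apply/eqP => h; lra.
  by move/negbTE => ->.
pose step n W := eZ (idx (y n)) *: ('X^(m (idx (y n))) * W) + Bf (idx (y n)).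
pose V := Vseq step Ax.
have Vbeta n : evZ (V n) beta = D%:~R * y n.
  elim: n => [|n IH]; first by rewrite /= -eAx.
  rewrite /= evZ_step IH -eB -heZ.
  rewrite (hS _ _ (hidx _ (hy n))); ring.
pose Bs (z : complex R) := \sum_i `|evZ (Bf i) z|.
pose Mz (z : complex R) := `|evZ Ax z| + Bs z / (1 - `|z|).
pose Mb z := if z == (beta%:C)%C then `|D|%:~R else Mz z.
have rsroot z : z \in rs -> root (map_poly intr p) z.
  by move=> zr; rewrite epC root_prod_XsubC.
have Bs0 z : 0 <= Bs z by apply: sumr_ge0 => ? _.
have Mz_ge0 z : `|z| < 1 -> 0 <= Mz z.
  by move=> z1; apply: addr_ge0 => //; apply: divr_ge0 => //; rewrite subr_ge0 ltW.
have Vbound n z : z \in rs -> `|evZ (V n) z| <= Mb z.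
  move=> zr; rewrite /Mb; case: eqP => [->|/eqP zb].
    rewrite evZ_C Vbeta rmorphM /= rmorph_int normrM -intr_norm.
    apply: ler_piMr; first by rewrite ler0z.
    have := hy n; rewrite in_itv /= => /andP [h0 h1].
    by rewrite ger0_norm ?ler0c // -(rmorph1 (real_complex R)) lecR.
  have z1 := conj z (rsroot z zr) zb.
  elim: n => [|n IH]; first by rewrite /= lerDl; apply: divr_ge0 => //; rewrite subr_ge0 ltW.
  rewrite /= evZ_step; set i := idx (y n).
  apply: le_trans (ler_normD _ _) _.
  rewrite !normrM normrX.
  have -> : `|(eZ i)%:~R : complex R| = 1.
    by rewrite /eZ; case: (eps i == 1); rewrite ?normrN normr1.
  rewrite mul1r.
  have zm : `|z| ^+ m i <= `|z|.
    have := hm i; case: (m i) => // k _; rewrite exprS; apply: ler_piMr => //.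
    by apply: exprn_ile1 => //; apply: ltW.
  apply: (@le_trans _ _ (`|z| * Mz z + Bs z)).
    apply: lerD; last by apply: (norm_sum_ge (fun j => evZ (Bf j) z)).
    by apply: ler_pM => //; apply: exprn_ge0.
  have e : Mz z - (`|z| * Mz z + Bs z) = (1 - `|z|) * `|evZ Ax z|.
    have nz : 1 - `|z| != 0 by rewrite subr_eq0 eq_sym lt_eqF.
    by rewrite /Mz; field.
  by rewrite -subr_ge0 e; apply: mulr_ge0 => //; rewrite subr_ge0 ltW.
have Mb0 z : z \in rs -> 0 <= Mb z.
  move=> zr; rewrite /Mb; case: eqP => [_|/eqP zb]; first by rewrite ler0z.
  exact: Mz_ge0 (conj z (rsroot z zr) zb).
pose Mall := \sum_(z <- rs) Mb z.
have Mall0 : 0 <= Mall by rewrite /Mall big_seq; apply: sumr_ge0.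
have Msum z : z \in rs -> Mb z <= Mall.
  move=> zr; rewrite /Mall (bigD1_seq z) //= lerDl big_seq_cond.
  by apply: sumr_ge0 => w /andP [wr _]; apply: Mb0.
have [N hN] := coef_bound urs Mall0.
pose Rn n := V n %% p.
have p0 : p != 0 by apply: monic_neq0.
have sR n : (size (Rn n) <= size rs)%N.
  rewrite srs; have := ltn_modp (V n) p; rewrite p0.
  by case: (size p).
have Rroot n z : z \in rs -> `|evZ (Rn n) z| <= Mall.
  move=> zr; rewrite /Rn evZ_mod //; last exact: rsroot.
  exact: le_trans (Vbound n z zr) (Msum z zr).
have cb n k := hN (Rn n) (sR n) (Rroot n) k.
pose f n : {ffun 'I_(size rs) -> 'I_(N + N).+1} :=
  [ffun k : 'I_(size rs) => inord (absz ((Rn n)`_k + N%:Z)%R)].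
have [i [j [ij e]]] := pigeon f.
have eR : Rn i = Rn j.
  apply/polyP => k; case: (ltnP k (size rs)) => [kd|kd]; last first.
    by rewrite !(leq_sizeP _ _ (sR _) k kd).
  have := congr1 (fun g : {ffun 'I_(size rs) -> 'I_(N + N).+1} => nat_of_ord (g (Ordinal kd))) e; rewrite /f !ffunE /=.
  rewrite !inordK ?shift_lt //.
  move=> h; have H := shift_inj (cb i k) (cb j k); exact: (H h).
have yij : y i = y j.
  have Dn : (D%:~R : R) != 0 by rewrite intr_eq0.
  have e1 := Vbeta i; have e2 := Vbeta j.
  rewrite -(evZ_mod (V i) mon rt) in e1; rewrite -(evZ_mod (V j) mon rt) in e2.
  change (evZ (Rn i) beta = D%:~R * y i) in e1.
  change (evZ (Rn j) beta = D%:~R * y j) in e2.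
  by apply: (mulfI Dn); rewrite -e1 -e2 eR.
exists i, (j - i)%N; split; first by rewrite subn_gt0.
rewrite (subnKC (ltnW ij)).
exact: (esym yij).
Qed.

Theorem theorem3p2 (R : realType) (beta : R) (l : nat)
  (J : 'I_l -> interval R) (eps : 'I_l -> R) (m : 'I_l -> nat)
  (b : 'I_l -> R) (S : R -> R) :
  pisot beta ->
  (* the J_i are subintervals forming a partition of [0,1] *)
  (forall i x, x \in J i -> x \in `[0, 1]) ->
  (forall x, x \in `[0, 1] -> exists i, x \in J i) ->
  (forall i j x, x \in J i -> x \in J j -> i = j) ->
  (forall i, eps i = 1 \/ eps i = -1) ->
  (forall i, (0 < m i)%N) ->
  (forall i, in_Qbeta beta (b i)) ->
  (forall i x, x \in J i -> S x = eps i * beta ^+ m i * x + b i) ->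
  (forall x, x \in `[0, 1] -> S x \in `[0, 1]) ->
  forall x, x \in `[(0 : R), 1] ->
    (eventually_periodic S x <-> in_Qbeta beta x).
Proof.
move=> [p [mon irr rt b1 conj]] hJ cov disj heps hm hb hS hS01 x hx.
have hbQ i := QB_of_in irr rt (hb i).
split.
- move=> ep; apply: in_of_QB.
  exact: (partB irr rt b1 cov heps hm hbQ hS hS01 hx ep).
- move=> q; apply: (partC mon irr rt b1 conj cov heps hm hbQ hS hS01 hx).
  exact: (QB_of_in irr rt q).
Qed.
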